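(* Let $A$ be an invertible $n\times n$ real matrix, $b\in\mathbb{R}^n$, and let $x^*=A^{-1}b$ with $i$-th component $x^*_i$. Let $Q=A^TA$, $w=A^Tb$, let $q_j$ denote the $j$-th column of $Q$, let $q_{\min}=\min\{\Vert q_j\Vert : j=1,\dots,n\}$, and let $\lambda_{\min}$ be the minimum eigenvalue of $Q$. Set $$\tau_*=\Big(\prod_{j=1}^n \Vert q_j\Vert\Big)\frac{\Vert w\Vert}{q_{\min}\,\lambda_{\min}^n},\qquad \tau'_*=\Big(\prod_{j=1}^n \Vert q_j\Vert\Big)\frac{\Vert w\Vert}{q_{\min}\,\det(Q)}.$$ Then for every $i=1,\dots,n$, $$x^*_i\geq -\tau'_*\geq -\tau_*.$$ In particular $\tau_*\geq\tau'_*\geq t_*$, where $$t_*=\min\big\{t : \text{there exists } x\in\mathbb{R}^n \text{ with } x\geq 0 \text{ and } A(x-te)=b\big\}$$ and $e=(1,\dots,1)^T\in\mathbb{R}^n$.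
   Context: $\Vert\cdot\Vert$ denotes the Euclidean norm. Inequalities between vectors ($x\geq 0$) are componentwise. *)

(* Defs.v *)
From HB Require Import structures.
From mathcomp Require Import all_boot all_order all_algebra.
Set Implicit Arguments. Unset Strict Implicit. Unset Printing Implicit Defensive.
Import Order.TTheory GRing.Theory Num.Theory.
Local Open Scope ring_scope.

Definition enorm (R : rcfType) (n : nat) (v : 'cV[R]_n) : R :=
  Num.sqrt (\sum_(i < n) v i 0 ^+ 2).

Definition ones (R : rcfType) (n : nat) : 'cV[R]_n := const_mx 1.

Definition feasible (R : rcfType) (n : nat) (A : 'M[R]_n) (b : 'cV[R]_n) (t : R) : Prop :=
  exists x : 'cV[R]_n, (forall i, 0 <= x i 0) /\ A *m (x - t *: ones R n) = b.

(* Main.v *)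
Require Import Defs.
From HB Require Import structures.
From mathcomp Require Import all_boot all_order all_algebra.
From mathcomp Require Import ring lra.
From mathcomp.real_closed Require Import complex.
Import Order.TTheory GRing.Theory Num.Theory.
Local Open Scope ring_scope.

Section Gram.
Set Implicit Arguments. Unset Strict Implicit. Unset Printing Implicit Defensive.
Variable R : rcfType.
Local Notation C := (R[i]).
Local Notation toC := (real_complex R).

Definition nc (m : nat) (v : 'rV[C]_m) : C := \sum_i v 0 i * conjc (v 0 i).

Lemma nc_ge0 m (v : 'rV[C]_m) : 0 <= nc v.
Proof. by apply: sumr_ge0 => i _; apply: mulcJ_ge0. Qed.

Lemma nc_gt0 m (v : 'rV[C]_m) : v != 0 -> 0 < nc v.
Proof.
move=> vn0; rewrite lt_def nc_ge0 andbT; apply: contra vn0 => /eqP.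
move/psumr_eq0P => H; have {}H := H (fun i _ => mulcJ_ge0 _); apply/eqP/rowP => i; rewrite !mxE.
have /eqP := H i isT; rewrite mulf_eq0 conjc_eq0 orbb => /eqP -> //.
Qed.

Lemma nc_mul m (u : 'rV[C]_m) : (u *m (map_mx conjc u)^T) 0 0 = nc u.
Proof. by rewrite mxE; apply: eq_bigr => i _; rewrite !mxE. Qed.

Lemma eig_gram_ge0 n (M : 'M[R]_n) z :
  eigenvalue (map_mx toC (M^T *m M)) z -> 0 <= z.
Proof.
case/eigenvalueP => v Hv vn0.
set MC := map_mx toC M.
have GC : map_mx toC (M^T *m M) = MC^T *m MC by rewrite map_mxM map_trmx.
set u := v *m MC^T.
have MCr : map_mx conjc MC = MC by apply/matrixP => i j; rewrite !mxE conjc_real.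
have key : (v *m map_mx toC (M^T *m M)) *m (map_mx conjc v)^T
           = u *m (map_mx conjc u)^T.
  rewrite GC /u map_mxM trmx_mul map_trmx !mulmxA.
  congr (_ *m _ *m _); apply/matrixP => i j; rewrite !mxE; exact: (esym (conjc_real _)).
move: key; rewrite Hv -scalemxAl => /matrixP /(_ 0 0).
rewrite mxE !nc_mul => H.
have ncv := nc_gt0 vn0.
have -> : z = nc u / nc v by rewrite -H mulfK // gt_eqF.
by rewrite divr_ge0 ?nc_ge0 // ltW.
Qed.

Lemma gram_roots n (M : 'M[R]_n) : exists r : seq R,
  [/\ size r = n, all (fun x => 0 <= x) r &
       char_poly (M^T *m M) = \prod_(x <- r) ('X - x%:P)].
Proof.
set G := M^T *m M.
have [rC HrC] := closed_field_poly_normal (char_poly (map_mx toC G)).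
rewrite (monicP (char_poly_monic _)) scale1r in HrC.
have Hr z : z \in rC -> toC (@complex.Re R z) = z /\ 0 <= @complex.Re R z.
  move=> zin; have z0 : 0 <= z.
    by apply: (eig_gram_ge0 (M:=M)); rewrite eigenvalue_root_char HrC root_prod_XsubC.
  have zr := ger0_real z0; split; first exact: RRe_real.
  by rewrite -ler0c RRe_real.
exists (map (@complex.Re R) rC).
have E : map_poly toC (char_poly G) = map_poly toC (\prod_(x <- map (@complex.Re R) rC) ('X - x%:P)).
  rewrite map_char_poly HrC rmorph_prod big_map; apply: eq_big_seq => z zin /=.
  by rewrite rmorphB /= map_polyX map_polyC /= (Hr z zin).1.
have E2 := map_poly_inj _ E.
split => //.
- by have := size_char_poly G; rewrite E2 size_prod_XsubC size_map => -[].
- by apply/allP => x /mapP [z zin ->]; exact (Hr z zin).2.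
Qed.

Lemma prod_const_seq (r : seq R) (c : R) : \prod_(x <- r) c = c ^+ size r.
Proof. by elim: r => [|a r IH]; rewrite ?big_nil ?expr0 // big_cons IH exprS. Qed.

Lemma prodXsub_coef0 (r : seq R) :
  (\prod_(x <- r) ('X - x%:P))`_0 = (-1) ^+ size r * \prod_(x <- r) x.
Proof.
elim: r => [|a r IH]; first by rewrite !big_nil coef1 mul1r.
rewrite !big_cons coef0M IH coefB coefX coefC /= sub0r exprS.
ring.
Qed.

Lemma prodXsub_coef_top (r : seq R) :
  (\prod_(x <- r) ('X - x%:P))`_(size r) = 1.
Proof.
by have := monicP (monic_prod_XsubC r xpredT id); rewrite lead_coefE size_prod_XsubC.
Qed.

Lemma prodXsub_coefS (r : seq R) (a : R) :
  (\prod_(x <- a :: r) ('X - x%:P))`_(size r) = - \sum_(x <- a :: r) x.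
Proof.
elim: r a => [|b r IH] a.
  rewrite !big_cons !big_nil mulr1 addr0 coefB coefX coefC /= sub0r.
  done.
rewrite big_cons mulrBl coefB coefXM /= IH coefCM.
rewrite -[(size r).+1]/(size (b :: r)) prodXsub_coef_top mulr1.
by rewrite [in RHS]big_cons opprD addrC.
Qed.


Lemma gram_props n (M : 'M[R]_n) : exists r : seq R,
  [/\ size r = n, all (fun x => 0 <= x) r, \det (M^T *m M) = \prod_(x <- r) x,
     (0 < n)%N -> \tr (M^T *m M) = \sum_(x <- r) x &
     forall x, eigenvalue (M^T *m M) x = (x \in r)].
Proof.
have [r [sz r0 Hc]] := gram_roots M.
exists r; split => //.
- have := char_poly_det (M^T *m M); rewrite Hc prodXsub_coef0 sz.
  by move/mulfI => -> //; rewrite signr_eq0.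
- case: r sz Hc {r0} => [|a r] sz Hc n0; first by rewrite -sz in n0.
  have := char_poly_trace (M^T *m M) n0; rewrite Hc -[n in _`_n.-1]sz /= prodXsub_coefS.
  by move/oppr_inj.
- by move=> x; rewrite eigenvalue_root_char Hc root_prod_XsubC.
Qed.

End Gram.

Section Had.
Variable R : rcfType.

Lemma enorm_ge0 n (v : 'cV[R]_n) : 0 <= enorm v.
Proof. exact: sqrtr_ge0. Qed.

Lemma enorm_sq n (v : 'cV[R]_n) : enorm v ^+ 2 = \sum_i v i 0 ^+ 2.
Proof. by rewrite sqr_sqrtr // sumr_ge0 // => i _; exact: sqr_ge0. Qed.

Lemma enorm_eq0 n (v : 'cV[R]_n) : enorm v = 0 -> v = 0.
Proof.
move=> H; have : \sum_i v i 0 ^+ 2 = 0 by rewrite -enorm_sq H expr0n.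
move/psumr_eq0P => H2; apply/colP => i; rewrite mxE.
by apply/eqP; rewrite -sqrf_eq0 H2 // => k _; exact: sqr_ge0.
Qed.

Lemma det_col0 n (M : 'M[R]_n) j : col j M = 0 -> \det M = 0.
Proof.
move=> H; rewrite (expand_det_col M j) big1 // => i _.
have /matrixP/(_ i 0) := H; rewrite !mxE => ->; exact: mul0r.
Qed.

Lemma hadamard n (M : 'M[R]_n) : `|\det M| <= \prod_j enorm (col j M).
Proof.
case: (boolP [exists j, enorm (col j M) == 0]) => [/existsP [j /eqP Hj] | Hall].
  rewrite (det_col0 (enorm_eq0 Hj)) normr0; apply: prodr_ge0 => *; exact: enorm_ge0.
have cpos j : 0 < enorm (col j M).
  rewrite lt_def enorm_ge0 andbT; apply: contra Hall => H; apply/existsP; by exists j.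
case: n M cpos {Hall} => [|n] M cpos; first by rewrite det_mx00 big_ord0 normr1.
set d := \row_j (enorm (col j M))^-1.
set N := M *m diag_mx d.
have detN : \det N = \det M * \prod_j (enorm (col j M))^-1.
  by rewrite det_mulmx det_diag; under eq_bigr do rewrite mxE.
have diagG j : (N^T *m N) j j = 1.
  rewrite mxE /N mul_mx_diag.
  transitivity ((enorm (col j M))^-1 ^+ 2 * enorm (col j M) ^+ 2).
    rewrite enorm_sq mulr_sumr; apply: eq_bigr => i _; rewrite !mxE; ring.
  by rewrite -exprMn mulVf ?gt_eqF // expr1n.
have [r [sz r0 dt tr _]] := gram_props N.
have trn : \tr (N^T *m N) = n.+1%:R.
  by rewrite /mxtrace; under eq_bigr do rewrite diagG; rewrite sumr_const card_ord.
have Hp : \prod_(x <- r) x <= 1.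
  have H := @leif_AGM R 'I_(size r) predT (fun i => r`_i).
  have [H1 _] := H (fun (i : 'I_(size r)) _ => allP r0 _ (mem_nth 0 (ltn_ord i))).
  move: H1; rewrite /= card_ord.
  have E1 : \prod_(i in @predT 'I_(size r)) r`_i = \prod_(x <- r) x :> R.
    by rewrite (big_nth 0) big_mkord.
  have E2 : \sum_(i in @predT 'I_(size r)) r`_i = \sum_(x <- r) x :> R.
    by rewrite (big_nth 0) big_mkord.
  by rewrite E1 E2 -tr // trn sz divff ?pnatr_eq0 // expr1n.
have : \det N ^+ 2 <= 1.
  by rewrite expr2 -{1}det_tr -det_mulmx dt.
rewrite -real_normK ?num_real // expr_le1 //.
rewrite detN normrM => H.
have Pp : 0 < \prod_j enorm (col j M) by apply: prodr_gt0 => j _.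
rewrite prodfV normfV (ger0_norm (ltW Pp)) in H.
by rewrite -(mul1r (\prod_j _)) -ler_pdivrMr.
Qed.

Lemma cramer_det n (Q : 'M[R]_n) (xs w : 'cV[R]_n) i : Q *m xs = w ->
  \det (\matrix_(k, j) (if j == i then w k 0 else Q k j)) = \det Q * xs i 0.
Proof.
move=> H.
set E := \matrix_(k, j) (if j == i then xs k 0 else (k == j)%:R) : 'M[R]_n.
have -> : \matrix_(k, j) (if j == i then w k 0 else Q k j) = Q *m E.
  apply/matrixP => k j; rewrite !mxE; case: eqP => [->|/eqP ji].
    by rewrite -H mxE; apply: eq_bigr => l _; rewrite mxE eqxx.
  rewrite -{1}(mulmx1 Q) mxE; apply: eq_bigr => l _; rewrite !mxE (negbTE ji) //.
rewrite det_mulmx; congr (_ * _).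
rewrite (expand_det_row _ i) (bigD1 i) //= big1 ?addr0; last first.
  by move=> j ji; rewrite !mxE (negbTE ji) eq_sym (negbTE ji) mul0r.
rewrite /cofactor.
have -> : row' i (col' i E) = 1%:M.
  apply/matrixP => k l; rewrite !mxE lift_eqF (inj_eq (@lift_inj _ i)) //.
rewrite !mxE eqxx det1 mulr1 -signr_odd addnn odd_double expr0 mulr1 //.
Qed.

End Had.

Theorem theorem7 (R : rcfType) (n : nat) (A : 'M[R]_n) (b : 'cV[R]_n)
  (qmin lmin : R) :
  A \in unitmx ->
  (* qmin = min_j ||q_j||, q_j the j-th column of Q = A^T A *)
  (exists j : 'I_n, qmin = enorm (col j (A^T *m A))) ->
  (forall j : 'I_n, qmin <= enorm (col j (A^T *m A))) ->
  (* lmin = minimum eigenvalue of Q *)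
  eigenvalue (A^T *m A) lmin ->
  (forall mu, eigenvalue (A^T *m A) mu -> lmin <= mu) ->
  let Q := A^T *m A in
  let w := A^T *m b in
  let xs := invmx A *m b in
  let P := \prod_(j < n) enorm (col j Q) in
  let tau := P * enorm w / (qmin * lmin ^+ n) in
  let tau' := P * enorm w / (qmin * \det Q) in
  (forall i : 'I_n, - tau' <= xs i 0 /\ - tau <= - tau') /\
  (tau' <= tau /\
   forall ts : R, feasible A b ts -> (forall t, feasible A b t -> ts <= t) ->
     ts <= tau').
Proof.
move=> Au [j0 Hj0] Hq Hl Hlmin Q w xs P tau tau'.
have dQ : \det Q = \det A ^+ 2 by rewrite /Q det_mulmx det_tr expr2.
have dA : \det A != 0 by move: Au; rewrite unitmxE unitfE.
have dQpos : 0 < \det Q.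
  by rewrite dQ lt_def sqr_ge0 andbT expf_neq0.
have Qxs : Q *m xs = w by rewrite /Q /xs -mulmxA mulKVmx.
have qpos : 0 < qmin.
  rewrite Hj0 lt_def enorm_ge0 andbT; apply/eqP => H0.
  by move: (det_col0 (enorm_eq0 H0)) dQpos => ->; rewrite ltxx.
have Pge0 : 0 <= P by apply: prodr_ge0 => j _; exact: enorm_ge0.
have wge0 : 0 <= enorm w by exact: enorm_ge0.
have bound i : `|xs i 0| <= tau'.
  set Qi := \matrix_(k, j) (if j == i then w k 0 else Q k j).
  have Ci : \det Qi = \det Q * xs i 0 by exact: cramer_det.
  have Hi := hadamard Qi.
  have colQi j : col j Qi = if j == i then w else col j Q.
    by apply/colP => k; rewrite [LHS]mxE /Qi [LHS]mxE; case: eqP => // _; rewrite [RHS]mxE.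
  have E2 : \prod_(j | j != i) enorm (col j Qi) = \prod_(j | j != i) enorm (col j Q).
    by apply: eq_bigr => j ji; rewrite colQi (negbTE ji).
  set P' := \prod_(j | j != i) enorm (col j Q) in E2.
  have HP : P = enorm (col i Q) * P' by rewrite /P (bigD1 i).
  have P'ge0 : 0 <= P' by apply: prodr_ge0 => j _; exact: enorm_ge0.
  rewrite (bigD1 i) //= colQi eqxx E2 Ci normrM (ger0_norm (ltW dQpos)) in Hi.
  rewrite /tau' ler_pdivlMr ?mulr_gt0 //.
  have -> : `|xs i 0| * (qmin * \det Q) = qmin * (\det Q * `|xs i 0|) by ring.
  apply: (le_trans (ler_wpM2l (ltW qpos) Hi)).
  rewrite HP -mulrA [P' * _]mulrC; apply: ler_wpM2r; last exact: Hq.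
  exact: mulr_ge0.
have [r [sz r0 dt _ eig]] := gram_props A.
have lr : lmin \in r by rewrite -eig.
have l0 : 0 <= lmin := allP r0 _ lr.
have lne0 : lmin != 0.
  apply/eqP => l00; move: dQpos; rewrite /Q dt (big_rem _ lr) /= l00 mul0r ltxx //.
have lpos : 0 < lmin by rewrite lt_def lne0.
have le : lmin ^+ n <= \det Q.
  rewrite /Q dt -sz -prod_const_seq big_seq [X in _ <= X]big_seq.
  by apply: ler_prod => x xr; rewrite l0 /= Hlmin // eig.
have tt : tau' <= tau.
  rewrite /tau /tau'; apply: ler_wpM2l; first exact: mulr_ge0.
  rewrite lef_pV2 ?posrE ?mulr_gt0 ?exprn_gt0 //.
  by apply: ler_wpM2l => //; exact: ltW.
split.
  move=> i; split; last by rewrite lerN2.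
  by have := bound i; rewrite ler_norml => /andP [].
split => // ts _ Hmin; apply: Hmin.
exists (xs + tau' *: ones R n); split.
  move=> i; rewrite mxE [X in _ + X]mxE /ones [X in _ * X]mxE mulr1.
  have := bound i; rewrite ler_norml => /andP [H _].
  lra.
by rewrite addrK /xs mulKVmx.
Qed.
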